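(* Let $q$ be a prime power and $n\ge1$. For $i=1,2$, let $\mathcal{C}_i$ be a $[2n,n,d_i]_q$ linear code with generator matrix $G_i=(I_n\ \ f_i(A_i))$, where $f_i(x)\in\mathbb{F}_q[x]$ and $A_i$ is an $n\times n$ Toeplitz matrix over $\mathbb{F}_q$. Assume that both $\mathcal{C}_1$ and $\mathcal{C}_2$ are Euclidean (resp. Hermitian, with $q$ an even power of a prime) LCD codes. Then for every integer $s\ge1$ there exists a $[4sn,2sn,\min\{d_1,d_2\}]_q$ code that is Euclidean (resp. Hermitian) formally self-dual and Euclidean (resp. Hermitian) LCD.
   Context: A Toeplitz matrix is a square matrix whose diagonals parallel to the main diagonal each have constant entries. Euclidean inner product $\sum_i x_iy_i$; for $q=p^h$ with $h$ even, Hermitian inner product $\sum_i x_iy_i^{\sqrt q}$. A code $\mathcal{C}$ is Euclidean (resp. Hermitian) LCD if $\mathcal{C}\cap\mathcal{C}^{\perp_E}=\{0\}$ (resp. $\mathcal{C}\cap\mathcal{C}^{\perp_H}=\{0\}$), and formally self-dual if it has the same weight distribution as its dual with respect to the given inner product. *)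

(* Defs.v *)
From mathcomp Require Import all_boot all_order all_algebra.
Set Implicit Arguments. Unset Strict Implicit. Unset Printing Implicit Defensive.
Import GRing.Theory.
Local Open Scope ring_scope.

Section Codes.
Variable F : finFieldType.

Definition poly_mx (n : nat) (f : {poly F}) (A : 'M[F]_n) : 'M[F]_n :=
  \sum_(i < size f) f`_i *: A ^+ i.

(* Toeplitz: constant along each diagonal, i.e. A i j depends only on j - i. *)
Definition toeplitz (n : nat) (A : 'M[F]_n) : Prop :=
  forall i j k l : 'I_n, (i + l = j + k)%N -> A i j = A k l.

Definition code_of (k N : nat) (G : 'M[F]_(k, N)) : {set 'rV[F]_N} :=
  [set v : 'rV[F]_N | (v <= G)%MS].

Definition wt (N : nat) (v : 'rV[F]_N) : nat := #|[set i : 'I_N | v 0 i != 0]|.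

Definition min_dist (N : nat) (C : {set 'rV[F]_N}) (d : nat) : Prop :=
  (exists2 c, c \in C & (c != 0) && (wt c == d)) /\
  (forall c, c \in C -> c != 0 -> (d <= wt c)%N).

Definition ipE (N : nat) (x y : 'rV[F]_N) : F := \sum_i x 0 i * y 0 i.
(* Hermitian inner product, with r = sqrt q. *)
Definition ipH (r N : nat) (x y : 'rV[F]_N) : F := \sum_i x 0 i * (y 0 i) ^+ r.

Definition dual (N : nat) (b : 'rV[F]_N -> 'rV[F]_N -> F) (C : {set 'rV[F]_N})
  : {set 'rV[F]_N} := [set y | [forall x in C, b x y == 0]].

Definition LCD (N : nat) (b : 'rV[F]_N -> 'rV[F]_N -> F) (C : {set 'rV[F]_N}) : Prop :=
  C :&: dual b C = [set 0].

Definition wdist (N : nat) (C : {set 'rV[F]_N}) (w : nat) : nat :=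
  #|[set v in C | wt v == w]|.

Definition formally_self_dual (N : nat) (b : 'rV[F]_N -> 'rV[F]_N -> F)
  (C : {set 'rV[F]_N}) : Prop :=
  forall w, wdist C w = wdist (dual b C) w.

End Codes.

(* Main.v *)
Require Import Defs.
From mathcomp Require Import all_boot all_order all_algebra.
From mathcomp Require Import finfield zify.
Set Implicit Arguments. Unset Strict Implicit. Unset Printing Implicit Defensive.
Import GRing.Theory.
Local Open Scope ring_scope.

Section Gen.
Variable F : finFieldType.
Variable phi : F -> F.
Hypothesis phiK : involutive phi.
Hypothesis phi0 : phi 0 = 0.

Definition ipg N (x y : 'rV[F]_N) : F := \sum_i x 0 i * phi (y 0 i).
Definition pmap N (z : 'rV[F]_N) : 'rV[F]_N := \row_i phi (z 0 i).

Lemma pmapK N : involutive (@pmap N).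
Proof. by move=> z; apply/rowP => i; rewrite !mxE phiK. Qed.

Lemma ipg_ipE N (x z : 'rV[F]_N) : ipg x z = ipE x (pmap z).
Proof. by apply: eq_bigr => i _; rewrite mxE. Qed.

Lemma dual_pmap N (C : {set 'rV[F]_N}) z :
  (z \in dual (@ipg N) C) = (pmap z \in dual (@ipE F N) C).
Proof. by rewrite !inE; apply: eq_forallb => x; rewrite ipg_ipE. Qed.

Lemma wtE N (v : 'rV[F]_N) : wt v = \sum_(i < N) (v 0 i != 0 : nat).
Proof.
rewrite /wt -sum1_card big_mkcond /=; apply: eq_bigr => i _.
by rewrite inE; case: (_ != _).
Qed.

Lemma wt_row_mx N1 N2 (a : 'rV[F]_N1) (b : 'rV[F]_N2) :
  wt (row_mx a b) = (wt a + wt b)%N.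
Proof.
rewrite !wtE big_split_ord; congr (_ + _)%N; apply: eq_bigr => i _.
  by rewrite row_mxEl.
by rewrite row_mxEr.
Qed.

Lemma wt_split N1 N2 (v : 'rV[F]_(N1 + N2)) :
  wt v = (wt (lsubmx v) + wt (rsubmx v))%N.
Proof. by rewrite -wt_row_mx hsubmxK. Qed.

Lemma wt0 N : wt (0 : 'rV[F]_N) = 0%N.
Proof. by rewrite wtE big1 // => i _; rewrite mxE eqxx. Qed.

Lemma phi_eq0 t : (phi t == 0) = (t == 0).
Proof. by apply/eqP/eqP => [h|->]; [rewrite -(phiK t) h phi0 | exact: phi0]. Qed.

Lemma wt_pmap N (z : 'rV[F]_N) : wt (pmap z) = wt z.
Proof. by rewrite !wtE; apply: eq_bigr => i _; rewrite mxE phi_eq0. Qed.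

Lemma wt_opp N (z : 'rV[F]_N) : wt (- z) = wt z.
Proof. by rewrite !wtE; apply: eq_bigr => i _; rewrite mxE oppr_eq0. Qed.

Definition Jm n : 'M[F]_n := \matrix_(i, j) ((j == rev_ord i)%:R).

Lemma mulJ m n (x : 'M[F]_(m, n)) i j : (x *m Jm n) i j = x i (rev_ord j).
Proof.
rewrite mxE (bigD1 (rev_ord j)) //= mxE rev_ordK eqxx mulr1 big1 ?addr0 //.
move=> k hk; rewrite mxE; case: eqP => [e|]; last by rewrite mulr0.
by case/eqP: hk; rewrite e rev_ordK.
Qed.

Lemma Jmul m n (x : 'M[F]_(n, m)) i j : (Jm n *m x) i j = x (rev_ord i) j.
Proof.
rewrite mxE (bigD1 (rev_ord i)) //= mxE eqxx mul1r big1 ?addr0 //.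
by move=> k hk; rewrite mxE (negbTE hk) mul0r.
Qed.

Lemma JJ n : Jm n *m Jm n = 1%:M.
Proof.
apply/matrixP => i j; rewrite Jmul !mxE rev_ordK eq_sym.
by case: eqP.
Qed.

Lemma wt_J n (x : 'rV[F]_n) : wt (x *m Jm n) = wt x.
Proof.
rewrite /wt -[RHS](card_preimset _ (@rev_ord_inj n)).
by apply: eq_card => i; rewrite !inE mulJ.
Qed.

Lemma ipE_mx N (x z : 'rV[F]_N) : ipE x z = (x *m z^T) 0 0.
Proof. by rewrite mxE; apply: eq_bigr => i _; rewrite mxE. Qed.

Lemma dualE_code k N (G : 'M[F]_(k, N)) z :
  (z \in dual (@ipE F N) (code_of G)) = (G *m z^T == 0).
Proof.
rewrite inE; apply/forallP/eqP => [h|h x].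
  apply/matrixP => i j; rewrite (ord1 j) [RHS]mxE.
  have := h (row i G); rewrite inE row_sub /= => /eqP <-.
  by rewrite mxE /ipE; apply: eq_bigr => l _; rewrite !mxE.
apply/implyP; rewrite inE => /submxP [u ->]; apply/eqP.
by rewrite ipE_mx -mulmxA h mulmx0 mxE.
Qed.


Lemma code_IB n (B : 'M[F]_n) v :
  (v \in code_of (row_mx 1%:M B)) = (rsubmx v == lsubmx v *m B).
Proof.
rewrite inE; apply/submxP/eqP => [[u ->]|h].
  by rewrite mul_mx_row row_mxKl row_mxKr mulmx1.
by exists (lsubmx v); rewrite mul_mx_row mulmx1 -h hsubmxK.
Qed.

Lemma dual_IB n (B : 'M[F]_n) z :
  (z \in dual (@ipE F _) (code_of (row_mx 1%:M B)))
    = (lsubmx z == - (rsubmx z *m B^T)).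
Proof.
rewrite dualE_code -{1}[z]hsubmxK tr_row_mx mul_row_col mul1mx addr_eq0.
by rewrite -(inj_eq (@trmx_inj _ _ _)) linearN /= trmx_mul trmxK.
Qed.

Lemma trmx_exp n (A : 'M[F]_n) i : (A ^+ i)^T = A^T ^+ i.
Proof.
elim: i => [|i IH]; first by rewrite !expr0 -idmxE tr_scalar_mx.
by rewrite exprS exprSr -mulmxE trmx_mul IH mulmxE.
Qed.

Lemma JexpJ n (A : 'M[F]_n) i :
  (Jm n *m A *m Jm n) ^+ i = Jm n *m A ^+ i *m Jm n.
Proof.
elim: i => [|i IH]; first by rewrite !expr0 -idmxE mulmx1 JJ.
rewrite exprSr IH exprSr -!mulmxE !mulmxA -[_ *m Jm n *m Jm n]mulmxA JJ mulmx1.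
by rewrite -!mulmxA.
Qed.

Lemma poly_mx_tr n f (A : 'M[F]_n) : (poly_mx f A)^T = poly_mx f A^T.
Proof.
rewrite /poly_mx raddf_sum; apply: eq_bigr => i _.
by rewrite -trmx_exp; apply/matrixP => a b; rewrite !mxE.
Qed.

Lemma poly_mx_J n f (A : 'M[F]_n) :
  poly_mx f (Jm n *m A *m Jm n) = Jm n *m poly_mx f A *m Jm n.
Proof.
rewrite /poly_mx mulmx_sumr mulmx_suml; apply: eq_bigr => i _.
by rewrite JexpJ scalemxAl scalemxAr.
Qed.

Lemma toeplitz_tr n (A : 'M[F]_n) : toeplitz A -> A^T = Jm n *m A *m Jm n.
Proof.
move=> tA; apply/matrixP => i j; rewrite mulJ Jmul mxE.
symmetry; apply: tA; rewrite /=.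
have := ltn_ord i; have := ltn_ord j; lia.
Qed.


Definition fsdS N (C : {set 'rV[F]_N}) :=
  exists sg : 'rV[F]_N -> 'rV[F]_N,
    [/\ injective sg, forall v, wt (sg v) = wt v
      & forall v, (sg v \in dual (@ipg N) C) = (v \in C)].

Definition good d k N := exists G : 'M[F]_(k, N),
  [/\ \rank G = k, min_dist (code_of G) d, fsdS (code_of G)
    & LCD (@ipg N) (code_of G)].

Definition tau n (v : 'rV[F]_(n + n)) : 'rV[F]_(n + n) :=
  row_mx (- (rsubmx v *m Jm n)) (lsubmx v *m Jm n).
Definition tau' n (v : 'rV[F]_(n + n)) : 'rV[F]_(n + n) :=
  row_mx (rsubmx v *m Jm n) (- (lsubmx v *m Jm n)).

Lemma tauK n : cancel (@tau n) (@tau' n).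
Proof.
move=> v; rewrite /tau /tau' row_mxKl row_mxKr -mulmxA JJ mulmx1.
by rewrite mulNmx -mulmxA JJ mulmx1 opprK hsubmxK.
Qed.

Lemma fsd_base n f (A : 'M[F]_n) : toeplitz A ->
  fsdS (code_of (row_mx 1%:M (poly_mx f A))).
Proof.
move=> tA; set B := poly_mx f A.
have BT : B^T = Jm n *m B *m Jm n by rewrite poly_mx_tr toeplitz_tr // poly_mx_J.
exists (fun v => pmap (tau v)); split.
- by apply: inj_comp; [exact: can_inj (@pmapK (n + n)) | exact: can_inj (@tauK n)].
- move=> v; rewrite wt_pmap /tau wt_row_mx wt_opp !wt_J [RHS]wt_split addnC //.
- move=> v; rewrite dual_pmap pmapK dual_IB code_IB /tau row_mxKl row_mxKr BT.
  rewrite eqr_opp !mulmxA -(mulmxA (lsubmx v)) (JJ n) mulmx1.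
  apply/eqP/eqP => [h|->] //.
  by rewrite -[rsubmx v]mulmx1 -(JJ n) mulmxA h -(mulmxA _ (Jm n)) JJ mulmx1.
Qed.

Lemma code_block k1 k2 N1 N2 (G1 : 'M[F]_(k1, N1)) (G2 : 'M[F]_(k2, N2)) v :
  (v \in code_of (block_mx G1 0 0 G2)) =
  (lsubmx v \in code_of G1) && (rsubmx v \in code_of G2).
Proof.
rewrite !inE; apply/submxP/andP => [[u ->]|[/submxP[u1 h1] /submxP[u2 h2]]].
  rewrite -[u]hsubmxK mul_row_block !mulmx0 addr0 add0r row_mxKl row_mxKr.
  by rewrite !submxMl.
exists (row_mx u1 u2).
by rewrite mul_row_block !mulmx0 addr0 add0r -h1 -h2 hsubmxK.
Qed.

Lemma ipg_split N1 N2 (x z : 'rV[F]_(N1 + N2)) :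
  ipg x z = ipg (lsubmx x) (lsubmx z) + ipg (rsubmx x) (rsubmx z).
Proof.
rewrite /ipg big_split_ord; congr (_ + _); apply: eq_bigr => i _; by rewrite !mxE.
Qed.

Lemma ipg0l N (z : 'rV[F]_N) : ipg 0 z = 0.
Proof. by rewrite /ipg big1 // => i _; rewrite mxE mul0r. Qed.

Lemma mem0 k N (G : 'M[F]_(k, N)) : 0 \in code_of G.
Proof. by rewrite inE sub0mx. Qed.

Lemma dual_block k1 k2 N1 N2 (G1 : 'M[F]_(k1, N1)) (G2 : 'M[F]_(k2, N2)) z :
  (z \in dual (@ipg _) (code_of (block_mx G1 0 0 G2))) =
  (lsubmx z \in dual (@ipg _) (code_of G1)) &&
  (rsubmx z \in dual (@ipg _) (code_of G2)).
Proof.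
rewrite !inE; apply/forallP/andP => [h|[h1 h2] x].
  split; apply/forallP => a; apply/implyP => ha.
    have := h (row_mx a 0); rewrite code_block row_mxKl row_mxKr ha mem0 /=.
    by rewrite ipg_split row_mxKl row_mxKr ipg0l addr0.
  have := h (row_mx 0 a); rewrite code_block row_mxKl row_mxKr ha mem0 /=.
  by rewrite ipg_split row_mxKl row_mxKr ipg0l add0r.
apply/implyP; rewrite code_block => /andP[ha hb].
rewrite ipg_split (eqP (implyP (forallP h1 _) ha)) (eqP (implyP (forallP h2 _) hb)).
by rewrite addr0.
Qed.

Lemma good_sum d k1 k2 N1 N2 : good d k1 N1 -> good d k2 N2 ->
  good d (k1 + k2) (N1 + N2).
Proof.
move=> [G1 [r1 [[c1 hc1 nc1] lb1] [s1 [i1 w1 m1]] L1]].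
move=> [G2 [r2 [[c2 hc2 nc2] lb2] [s2 [i2 w2 m2]] L2]].
exists (block_mx G1 0 0 G2); split.
- by rewrite rank_diag_block_mx r1 r2.
- split.
    exists (row_mx c1 0); first by rewrite code_block row_mxKl row_mxKr hc1 mem0.
    by rewrite row_mx_eq0 wt_row_mx wt0 addn0 eqxx andbT.
  move=> c; rewrite code_block => /andP[ha hb] nz.
  rewrite wt_split; case: (eqVneq (lsubmx c) 0) => [e|ne].
    have nr : rsubmx c != 0.
      by apply: contra nz => /eqP e2; rewrite -[c]hsubmxK e e2 row_mx0.
    by apply: leq_trans (lb2 _ hb nr) _; rewrite leq_addl.
  by apply: leq_trans (lb1 _ ha ne) _; rewrite leq_addr.
- exists (fun v => row_mx (s1 (lsubmx v)) (s2 (rsubmx v))); split.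
  + move=> v w /eq_row_mx [/i1 e1 /i2 e2].
    by rewrite -[v]hsubmxK -[w]hsubmxK e1 e2.
  + by move=> v; rewrite wt_row_mx w1 w2 [RHS]wt_split.
  + by move=> v; rewrite dual_block row_mxKl row_mxKr m1 m2 code_block.
- apply/setP => v; rewrite in_setI in_set1 code_block dual_block.
  have E1 u : (u \in code_of G1) && (u \in dual (@ipg _) (code_of G1)) = (u == 0).
    by move/setP: L1 => /(_ u); rewrite in_setI in_set1.
  have E2 u : (u \in code_of G2) && (u \in dual (@ipg _) (code_of G2)) = (u == 0).
    by move/setP: L2 => /(_ u); rewrite in_setI in_set1.
  by rewrite andbACA E1 E2 -row_mx_eq0 hsubmxK.
Qed.

Lemma good_iter d n : good d n (n + n) ->
  forall m, good d (m.+1 * n) (m.+1 * (n + n)).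
Proof.
move=> g; elim=> [|m IH]; first by rewrite !mul1n.
by rewrite mulSn (mulSn m.+1); apply: good_sum.
Qed.

Lemma good_final d k N : good d k N ->
  exists G : 'M[F]_(k, N),
    [/\ \rank G = k, min_dist (code_of G) d,
        formally_self_dual (@ipg N) (code_of G) & LCD (@ipg N) (code_of G)].
Proof.
move=> [G [r md [s [i w m]] L]]; exists G; split => // x.
rewrite /wdist -[RHS](card_preimset _ i); apply: eq_card => v.
by move: (m v) (w v); rewrite !inE => -> ->.
Qed.

Lemma rank_IB n (B : 'M[F]_n) : \rank (row_mx 1%:M B) = n.
Proof.
apply/eqP; rewrite eqn_leq rank_leq_row /=.
have := mxrankM_maxl (row_mx 1%:M B) (col_mx 1%:M 0).
by rewrite mul_row_col mulmx0 addr0 mulmx1 mxrank1.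
Qed.

Lemma core n d f (A : 'M[F]_n) : (0 < n)%N -> toeplitz A ->
  let G := row_mx 1%:M (poly_mx f A) in
  min_dist (code_of G) d -> LCD (@ipg _) (code_of G) ->
  forall s : nat, (0 < s)%N ->
    exists G : 'M[F]_(2 * s * n, 4 * s * n),
      [/\ \rank G = (2 * s * n)%N, min_dist (code_of G) d,
          formally_self_dual (@ipg _) (code_of G) & LCD (@ipg _) (code_of G)].
Proof.
move=> n0 tA G md L s s0.
have g : good d n (n + n).
  by exists G; split => //; [exact: rank_IB | exact: fsd_base].
have e : (4 * s * n = 2 * s * (n + n))%N by lia.
rewrite e; apply: good_final.
have := good_iter g (2 * s).-1; rewrite prednK //; lia.
Qed.

End Gen.

Theorem theorem5 (F : finFieldType) (n : nat) (f1 f2 : {poly F})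
  (A1 A2 : 'M[F]_n) (d1 d2 : nat) :
  (0 < n)%N -> toeplitz A1 -> toeplitz A2 ->
  let G1 := row_mx 1%:M (poly_mx f1 A1) in
  let G2 := row_mx 1%:M (poly_mx f2 A2) in
  min_dist (code_of G1) d1 -> min_dist (code_of G2) d2 ->
  (* Euclidean case *)
  ((LCD (@ipE F _) (code_of G1) -> LCD (@ipE F _) (code_of G2) ->
    forall s : nat, (0 < s)%N ->
    exists G : 'M[F]_(2 * s * n, 4 * s * n),
      [/\ \rank G = (2 * s * n)%N, min_dist (code_of G) (minn d1 d2),
          formally_self_dual (@ipE F _) (code_of G) & LCD (@ipE F _) (code_of G)])
  /\
  (* Hermitian case: q = #|F| = p ^ h with h even, sqrt q = p ^ (h / 2) *)
  (forall p h : nat, prime p -> ~~ odd h -> #|F| = (p ^ h)%N ->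
    LCD (@ipH F (p ^ h./2) _) (code_of G1) -> LCD (@ipH F (p ^ h./2) _) (code_of G2) ->
    forall s : nat, (0 < s)%N ->
    exists G : 'M[F]_(2 * s * n, 4 * s * n),
      [/\ \rank G = (2 * s * n)%N, min_dist (code_of G) (minn d1 d2),
          formally_self_dual (@ipH F (p ^ h./2) _) (code_of G)
        & LCD (@ipH F (p ^ h./2) _) (code_of G)])).
Proof.
move=> n0 t1 t2 G1 G2 md1 md2; split.
  move=> L1 L2 s s0.
  have idK : involutive (fun t : F => t) by [].
  case: (leqP d1 d2) => h.
    exact: (@core F (fun t => t) idK erefl n d1 f1 A1 n0 t1 md1 L1 s s0).
  exact: (@core F (fun t => t) idK erefl n d2 f2 A2 n0 t2 md2 L2 s s0).
move=> p h pp ev cF L1 L2 s s0.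
set r := (p ^ h./2)%N.
have r0 : (0 < r)%N by rewrite expn_gt0 prime_gt0.
have phiK : involutive (fun t : F => t ^+ r).
  move=> t; rewrite -exprM -expnD.
  have -> : (h./2 + h./2 = h)%N.
    by move: (odd_double_half h); rewrite (negbTE ev) add0n -addnn.
  by rewrite -cF expf_card.
have phi0 : (fun t : F => t ^+ r) 0 = 0 by rewrite /= expr0n eqn0Ngt r0.
case: (leqP d1 d2) => hd.
  exact: (@core F (fun t => t ^+ r) phiK phi0 n d1 f1 A1 n0 t1 md1 L1 s s0).
exact: (@core F (fun t => t ^+ r) phiK phi0 n d2 f2 A2 n0 t2 md2 L2 s s0).
Qed.
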